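(* Let $G$ be a countable linear sofic group. Then there exist a non-principal ultrafilter $\omega'$ on $\mathbb{N}$, a sequence $m_k\to\infty$ and a group morphism $\Psi:G\to\prod_{k\to\omega'}GL_{m_k}(\mathbb{C})/d_{\omega'}$ such that $d_{\omega'}(\Psi(g),\mathrm{Id})\geqslant\frac14$ for every $g\in G\setminus\{e\}$.
   Context: For $a\in M_n(\mathbb{C})$, $\rho(a)=\operatorname{rk}(a)/n$. For a non-principal ultrafilter $\omega$ on $\mathbb{N}$ and $n_k\to\infty$, $\prod_{k\to\omega}GL_{n_k}(\mathbb{C})/d_\omega$ is the quotient of $\prod_kGL_{n_k}(\mathbb{C})$ by $\{(a_k)_k:\lim_{k\to\omega}\rho(a_k-\mathrm{Id})=0\}$, with metric $d_\omega((a_k),(b_k))=\lim_{k\to\omega}\rho(a_k-b_k)$. A countable group is linear sofic if it admits an injective group morphism into some $\prod_{k\to\omega}GL_{n_k}(\mathbb{C})/d_\omega$. *)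

(* Defs.v *)
From HB Require Import structures.
From Stdlib Require Import Reals Lra Psatz.
From Stdlib Require Import Classical ClassicalEpsilon FunctionalExtensionality.
From mathcomp Require Import all_boot all_order all_algebra.
Set Implicit Arguments. Unset Strict Implicit. Unset Printing Implicit Defensive.

Record complex := mkC { Rep : R; Imp : R }.
Definition C := complex.

Definition C_eqb (x y : C) : bool :=
  if excluded_middle_informative (x = y) then true else false.
Lemma C_eqP : Equality.axiom C_eqb.
Proof. move=> x y; rewrite /C_eqb; case: excluded_middle_informative => h; by constructor. Qed.
HB.instance Definition _ := hasDecEq.Build C C_eqP.

Definition C_find (P : pred C) (n : nat) : option C :=
  match excluded_middle_informative (exists x, P x) with
  | left h => Some (proj1_sig (constructive_indefinite_description _ h))
  | right _ => None
  end.
Lemma C_find_correct P n x : C_find P n = Some x -> P x.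
Proof.
rewrite /C_find; case: excluded_middle_informative => // h [<-].
exact: proj2_sig (constructive_indefinite_description _ h).
Qed.
Lemma C_find_complete (P : pred C) : (exists x, P x) -> exists n, C_find P n.
Proof. move=> h; exists 0%N; rewrite /C_find; case: excluded_middle_informative => //. Qed.
Lemma C_find_ext (P Q : pred C) : P =1 Q -> C_find P =1 C_find Q.
Proof. move=> /functional_extensionality -> //. Qed.
HB.instance Definition _ := hasChoice.Build C C_find_correct C_find_complete C_find_ext.

Local Open Scope R_scope.
Definition C0 : C := mkC 0 0.
Definition C1 : C := mkC 1 0.
Definition Copp (x : C) : C := mkC (- Rep x) (- Imp x).
Definition Cadd (x y : C) : C := mkC (Rep x + Rep y) (Imp x + Imp y).
Definition Cmul (x y : C) : C :=
  mkC (Rep x * Rep y - Imp x * Imp y) (Rep x * Imp y + Imp x * Rep y).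
Definition Cinv (x : C) : C :=
  mkC (Rep x / (Rep x * Rep x + Imp x * Imp x))
      (- Imp x / (Rep x * Rep x + Imp x * Imp x)).

Lemma Cadd_assoc : associative Cadd.
Proof. move=> [a b] [c d] [e f]; rewrite /Cadd /=; f_equal; ring. Qed.
Lemma Cadd_comm : commutative Cadd.
Proof. move=> [a b] [c d]; rewrite /Cadd /=; f_equal; ring. Qed.
Lemma Cadd0 : left_id C0 Cadd.
Proof. move=> [a b]; rewrite /Cadd /=; f_equal; ring. Qed.
Lemma CaddN : left_inverse C0 Copp Cadd.
Proof. move=> [a b]; rewrite /Cadd /C0 /=; f_equal; ring. Qed.
HB.instance Definition _ := GRing.isZmodule.Build C Cadd_assoc Cadd_comm Cadd0 CaddN.

Lemma Cmul_assoc : associative Cmul.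
Proof. move=> [a b] [c d] [e f]; rewrite /Cmul /=; f_equal; ring. Qed.
Lemma Cmul_comm : commutative Cmul.
Proof. move=> [a b] [c d]; rewrite /Cmul /=; f_equal; ring. Qed.
Lemma Cmul1 : left_id C1 Cmul.
Proof. move=> [a b]; rewrite /Cmul /=; f_equal; ring. Qed.
Lemma CmulDl : left_distributive Cmul Cadd.
Proof. move=> [a b] [c d] [e f]; rewrite /Cmul /Cadd /=; f_equal; ring. Qed.
Lemma C1_neq0 : C1 != C0.
Proof. apply/eqP => -[h]; lra. Qed.
HB.instance Definition _ :=
  GRing.Zmodule_isComNzRing.Build C Cmul_assoc Cmul_comm Cmul1 CmulDl C1_neq0.

Lemma CmulVf (x : C) : x != 0%R -> (Cinv x * x)%R = 1%R.
Proof.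
case: x => a b /eqP hx.
have hn : a * a + b * b <> 0.
  move=> h; apply: hx.
  have ha : a = 0 by nra.
  have hb : b = 0 by nra.
  by rewrite ha hb.
change (Cmul (Cinv (mkC a b)) (mkC a b) = C1).
rewrite /Cmul /Cinv /C1 /=; f_equal; field; exact: hn.
Qed.
Lemma Cinv0 : Cinv 0%R = 0%R.
Proof.
change (Cinv C0 = C0); rewrite /Cinv /C0 /=; f_equal; rewrite /Rdiv;
  replace (0 * 0 + 0 * 0) with 0 by ring; rewrite Rinv_0; ring.
Qed.
HB.instance Definition _ := GRing.ComNzRing_isField.Build C CmulVf Cinv0.
Close Scope R_scope.

Record countable_group := CountableGroup {
  gcar :> Type;
  gmul : gcar -> gcar -> gcar;
  ginv : gcar -> gcar;
  gone : gcar;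
  gmulA : forall x y z, gmul x (gmul y z) = gmul (gmul x y) z;
  gmul1 : forall x, gmul gone x = x;
  gmulV : forall x, gmul (ginv x) x = gone;
  gcountable : exists f : gcar -> nat, injective f
}.

Record ultrafilter := Ultrafilter {
  uf_mem : (nat -> Prop) -> Prop;
  uf_full : uf_mem (fun _ => True);
  uf_proper : ~ uf_mem (fun _ => False);
  uf_inter : forall A B, uf_mem A -> uf_mem B -> uf_mem (fun k => A k /\ B k);
  uf_upward : forall A B : nat -> Prop, (forall k, A k -> B k) -> uf_mem A -> uf_mem B;
  uf_ultra : forall A : nat -> Prop, uf_mem A \/ uf_mem (fun k => ~ A k)
}.

Definition nonprincipal (U : ultrafilter) : Prop :=
  forall m : nat, ~ uf_mem U (fun k => k = m).

Local Open Scope R_scope.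
Definition is_ulim (U : ultrafilter) (x : nat -> R) (L : R) : Prop :=
  forall eps : R, 0 < eps -> uf_mem U (fun k => Rabs (x k - L) < eps).
Close Scope R_scope.

Definition diverges (n : nat -> nat) : Prop :=
  forall N : nat, exists K : nat, forall k : nat, (K <= k)%N -> (N <= n k)%N.

Local Open Scope ring_scope.

Definition rho (n : nat) (a : 'M[C]_n) : R := Rdiv (INR (\rank a)) (INR n).

(* elements of prod_k GL_{n_k}(C): sequences of invertible matrices *)
Definition mxseq (n : nat -> nat) := forall k : nat, 'M[C]_(n k).
Definition is_GLseq (n : nat -> nat) (a : mxseq n) : Prop :=
  forall k, a k \in unitmx.
Definition mxseq_one (n : nat -> nat) : mxseq n := fun k => 1%:M.
Definition mxseq_mul (n : nat -> nat) (a b : mxseq n) : mxseq n :=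
  fun k => a k *m b k.

Definition d_omega_is (U : ultrafilter) (n : nat -> nat) (a b : mxseq n) (L : R) : Prop :=
  is_ulim U (fun k => rho (a k - b k)) L.

(* A group morphism G -> prod_{k->U} GL_{n_k}(C)/d_U, given through a lift
   Phi : G -> prod_k GL_{n_k}(C); Phi(gh) and Phi(g)Phi(h) must have the
   same class in the quotient, i.e. be at d_U-distance 0. *)
Definition ultraprod_morphism (G : countable_group) (U : ultrafilter)
    (n : nat -> nat) (Phi : G -> mxseq n) : Prop :=
  (forall g, is_GLseq (Phi g)) /\
  (forall g h, d_omega_is U (Phi (gmul g h)) (mxseq_mul (Phi g) (Phi h)) R0).

Definition ultraprod_injective (G : countable_group) (U : ultrafilter)
    (n : nat -> nat) (Phi : G -> mxseq n) : Prop :=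
  forall g h, d_omega_is U (Phi g) (Phi h) R0 -> g = h.

Definition linear_sofic (G : countable_group) : Prop :=
  exists (U : ultrafilter) (n : nat -> nat) (Phi : G -> mxseq n),
    [/\ nonprincipal U, diverges n, ultraprod_morphism U Phi
      & ultraprod_injective U Phi].

(* Main.v *)
Require Import Defs.
From HB Require Import structures.
From Stdlib Require Import Reals.
From mathcomp Require Import all_boot all_order all_algebra.
From Stdlib Require Import Lra Psatz Classical Cantor.
From mathcomp Require Import mxtens zify.
Import Defs.
Set Implicit Arguments. Unset Strict Implicit. Unset Printing Implicit Defensive.
Import GRing.Theory.
Module MLin.
Local Open Scope ring_scope.

Section Tens.
Variable F : fieldType.

Lemma tens11 m n : (1%:M : 'M[F]_m) *t (1%:M : 'M[F]_n) = 1%:M.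
Proof.
apply/matrixP=> i j.
case: (mxtens_indexP i)=> i0 i1; case: (mxtens_indexP j)=> j0 j1.
rewrite tensmxE !mxE -natrM mulnb; congr (_%:R); congr nat_of_bool.
apply/idP/idP.
  by case/andP=> /eqP-> /eqP->.
by move/eqP/(can_inj (@mxtens_indexK _ _))=> [-> ->]; rewrite !eqxx.
Qed.

Lemma tensmxDl m n p q (A B : 'M[F]_(m, n)) (C : 'M[F]_(p, q)) :
  (A + B) *t C = A *t C + B *t C.
Proof. by apply/matrixP=> i j; rewrite !mxE mulrDl. Qed.
Lemma tensmxDr m n p q (A : 'M[F]_(m, n)) (B C : 'M[F]_(p, q)) :
  A *t (B + C) = A *t B + A *t C.
Proof. by apply/matrixP=> i j; rewrite !mxE mulrDr. Qed.
Lemma tensmxNl m n p q (A : 'M[F]_(m, n)) (C : 'M[F]_(p, q)) :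
  (- A) *t C = - (A *t C).
Proof. by apply/matrixP=> i j; rewrite !mxE mulNr. Qed.
Lemma tensmxNr m n p q (A : 'M[F]_(m, n)) (C : 'M[F]_(p, q)) :
  A *t (- C) = - (A *t C).
Proof. by apply/matrixP=> i j; rewrite !mxE mulrN. Qed.
Lemma tensmxBl m n p q (A B : 'M[F]_(m, n)) (C : 'M[F]_(p, q)) :
  (A - B) *t C = A *t C - B *t C.
Proof. by rewrite tensmxDl tensmxNl. Qed.
Lemma tensmxBr m n p q (A : 'M[F]_(m, n)) (B C : 'M[F]_(p, q)) :
  A *t (B - C) = A *t B - A *t C.
Proof. by rewrite tensmxDr tensmxNr. Qed.

Lemma rank_tens_ge m n p q (A : 'M[F]_(m, n)) (B : 'M[F]_(p, q)) :
  (\rank A * \rank B <= \rank (A *t B))%N.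
Proof.
have [L HL] := row_fullP (col_base_full A).
have [D HD] := row_freeP (row_base_free A).
have [L' HL'] := row_fullP (col_base_full B).
have [D' HD'] := row_freeP (row_base_free B).
have E : (L *t L') *m (A *t B) *m (D *t D') = 1%:M.
  rewrite !tensmx_mul.
  have -> : L *m A *m D = 1%:M.
    have -> : L *m A *m D = L *m (col_base A *m row_base A) *m D by rewrite mulmx_base.
    by rewrite (mulmxA L) HL mul1mx HD.
  have -> : L' *m B *m D' = 1%:M.
    have -> : L' *m B *m D' = L' *m (col_base B *m row_base B) *m D' by rewrite mulmx_base.
    by rewrite (mulmxA L') HL' mul1mx HD'.
  exact: tens11.
have := mxrank1 F (\rank A * \rank B)%N; rewrite -E => <-.
have h1 := mxrankM_maxl (L *t L' *m (A *t B)) (D *t D'). have h2 := mxrankM_maxr (L *t L') (A *t B). exact (leq_trans h1 h2).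
Qed.

Lemma rank_tens_lel m n p q (A : 'M[F]_(m, n)) (B : 'M[F]_(p, q)) :
  (\rank (A *t B) <= \rank A * p)%N.
Proof.
have -> : A *t B = (col_base A *t 1%:M) *m (row_base A *t B).
  by rewrite tensmx_mul mul1mx mulmx_base.
exact (leq_trans (mxrankM_maxr _ _) (rank_leq_row _)).
Qed.

Lemma rank_tens_ler m n p q (A : 'M[F]_(m, n)) (B : 'M[F]_(p, q)) :
  (\rank (A *t B) <= m * \rank B)%N.
Proof.
have -> : A *t B = (1%:M *t col_base B) *m (A *t row_base B).
  by rewrite tensmx_mul mul1mx mulmx_base.
exact (leq_trans (mxrankM_maxr _ _) (rank_leq_row _)).
Qed.

End Tens.

End MLin.
Import MLin.

Module MLin2.
Local Open Scope ring_scope.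

Section TT.
Variable F : fieldType.
Variable n : nat.

Definition Tb (a : 'M[F]_n) : 'M[F]_(n+n) := block_mx a 0 0 1%:M.
Definition Tm (a : 'M[F]_n) : 'M[F]_(n*(n+n)) := a *t Tb a.

Lemma TbM (a b : 'M[F]_n) : Tb (a *m b) = Tb a *m Tb b.
Proof. by rewrite /Tb mulmx_block !mulmx0 !mul0mx !addr0 !add0r mulmx1. Qed.

Lemma TmM (a b : 'M[F]_n) : Tm (a *m b) = Tm a *m Tm b.
Proof. by rewrite /Tm tensmx_mul TbM. Qed.

Lemma Tb1 : Tb 1%:M = 1%:M.
Proof. by rewrite /Tb -scalar_mx_block. Qed.

Lemma TbB (a b : 'M[F]_n) : Tb a - Tb b = block_mx (a - b) 0 0 0.
Proof. by rewrite /Tb opp_block_mx add_block_mx !oppr0 !addr0 subrr. Qed.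

Lemma Tm_unit (a : 'M[F]_n) : a \in unitmx -> Tm a \in unitmx.
Proof.
rewrite /Tm /Tb; case: n a => [|k] a ua.
  by rewrite unitmxE det_mx00 unitr1.
apply: tensmx_unit => //.
by rewrite block_diag_mx_unit ua unitmx1.
Qed.

Lemma rank_TbB (a b : 'M[F]_n) : \rank (Tb a - Tb b) = \rank (a - b).
Proof. by rewrite TbB rank_diag_block_mx mxrank0 addn0. Qed.

Lemma Tm_upper (a b : 'M[F]_n) :
  (\rank (Tm a - Tm b)%R <= \rank (a - b)%R * (n + n) + n * \rank (a - b)%R)%N.
Proof.
have -> : Tm a - Tm b = (a - b) *t Tb a + b *t (Tb a - Tb b).
  by rewrite /Tm tensmxBl tensmxBr addrA subrK.
apply: leq_trans (mxrank_add _ _) _.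
apply: leq_add; first exact: rank_tens_lel.
by rewrite -(rank_TbB a b); exact: rank_tens_ler.
Qed.

End TT.

End MLin2.
Import MLin2.

Module MLin3.
Local Open Scope ring_scope.

Section Lower.
Variable F : fieldType.
Variable n : nat.
Variable a : 'M[F]_n.
Hypothesis ua : a \in unitmx.

Let b := Tb a.
Let c := Tb (invmx a).
Let r := \rank (a - 1%:M).

Lemma bc : b *m c = 1%:M.
Proof. by rewrite /b /c -TbM mulmxV // Tb1. Qed.
Lemma cb : c *m b = 1%:M.
Proof. by rewrite /b /c -TbM mulVmx // Tb1. Qed.

Lemma one_c : 1%:M - c = c *m (b - 1%:M).
Proof. by rewrite mulmxBr cb mulmx1. Qed.

Lemma rank_b1 : \rank (b - 1%:M) = r.
Proof. by rewrite /b -Tb1 rank_TbB. Qed.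

Lemma rank_1c : \rank (1%:M - c) = r.
Proof.
apply/eqP; rewrite eqn_leq one_c; apply/andP; split.
  by rewrite -rank_b1; exact: mxrankM_maxr.
rewrite -rank_b1.
have {1}-> : b - 1%:M = b *m (c *m (b - 1%:M)) by rewrite mulmxA bc mul1mx.
exact: mxrankM_maxr.
Qed.

Let Kc := kermx (c - 1%:M).
Let Ka := kermx (a - 1%:M).

Lemma Kc_c : Kc *m c = Kc.
Proof.
have := mulmx_ker (c - 1%:M); rewrite mulmxBr mulmx1 => /eqP.
by rewrite subr_eq0 => /eqP.
Qed.
Lemma Ka_a : Ka *m a = Ka.
Proof.
have := mulmx_ker (a - 1%:M); rewrite mulmxBr mulmx1 => /eqP.
by rewrite subr_eq0 => /eqP.
Qed.

Let M' : 'M[F]_(n * (n + n)) := a *t 1%:M - 1%:M *t c.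

Lemma step1 : (\rank M' <= \rank (Tm a - 1%:M)%R)%N.
Proof.
have -> : M' = (Tm a - 1%:M) *m (1%:M *t c).
  by rewrite mulmxBl mul1mx /Tm tensmx_mul mulmx1 -/b bc.
exact: mxrankM_maxl.
Qed.

Let P := (a - 1%:M) *t Kc.
Let Q := Ka *t (1%:M - c).

Lemma stepS : (\rank (col_mx P Q) <= \rank M')%N.
Proof.
have -> : col_mx P Q = col_mx (1%:M *t Kc) (Ka *t 1%:M) *m M'.
  rewrite mul_col_mx /M' !mulmxBr !tensmx_mul !mul1mx !mulmx1 Kc_c Ka_a.
  by rewrite /P /Q tensmxBl tensmxBr.
exact: mxrankM_maxr.
Qed.

Lemma stepZ k (Z2 : 'M[F]_(n + n, k)) : (1%:M - c) *m Z2 = 0 ->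
  (\rank Q + \rank ((a - 1%:M) *t (Kc *m Z2)) <= \rank (col_mx P Q))%N.
Proof.
move=> hZ; set Z : 'M[F]_(n * (n+n), n * k) := 1%:M *t Z2.
rewrite -(mxrank_mul_ker (col_mx P Q) Z) [X in (_ <= X)%N]addnC.
apply: leq_add.
  apply: mxrankS; rewrite sub_capmx; apply/andP; split.
    have {1}-> : Q = row_mx 0 1%:M *m col_mx P Q by rewrite mul_row_col mul0mx add0r mul1mx.
    exact: submxMl.
  by apply/sub_kermxP; rewrite /Q /Z tensmx_mul hZ mulmx1 tensmx0.
have -> : col_mx P Q *m Z = col_mx ((a - 1%:M) *t (Kc *m Z2)) 0.
  by rewrite mul_col_mx /P /Q /Z !tensmx_mul hZ mulmx1 tensmx0.
by rewrite rank_col_mx0.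
Qed.

Lemma rankQ : ((n - r) * r <= \rank Q)%N.
Proof.
by have := rank_tens_ge Ka (1%:M - c); rewrite /Ka mxrank_ker rank_1c.
Qed.

Lemma core k (Z2 : 'M[F]_(n + n, k)) : (1%:M - c) *m Z2 = 0 ->
  ((n - r) * r + r * \rank (Kc *m Z2) <= \rank (Tm a - 1%:M)%R)%N.
Proof.
move=> hZ; apply: leq_trans (step1); apply: leq_trans stepS.
apply: leq_trans (stepZ hZ); apply: leq_add; first exact: rankQ.
exact: rank_tens_ge.
Qed.

Lemma lower1 : ((n - r) * r + r * ((n + n - r) - r) <= \rank (Tm a - 1%:M)%R)%N.
Proof.
apply: leq_trans (core (mulmx_coker (1%:M - c))); rewrite leq_add2l leq_mul2l.
apply/orP; right.
apply: leq_trans (mxrank_mul_min _ _).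
rewrite mxrank_coker rank_1c /Kc mxrank_ker.
have -> : c - 1%:M = - (1%:M - c) by rewrite opprB.
rewrite mxrank_opp rank_1c.
have := rank_leq_row (a - 1%:M); rewrite -/r; lia.
Qed.

Lemma lower2 : ((n - r) * r + r * n <= \rank (Tm a - 1%:M)%R)%N.
Proof.
pose Z2 : 'M[F]_(n + n) := block_mx 0 0 0 1%:M.
have hZ : (1%:M - c) *m Z2 = 0.
  rewrite one_c -mulmxA /b -Tb1 TbB /Z2 mulmx_block.
  by rewrite !mulmx0 !mul0mx !addr0 block_mx0 mulmx0.
apply: leq_trans (core hZ); rewrite leq_add2l leq_mul2l; apply/orP; right.
pose R0 : 'M[F]_(n, n + n) := row_mx 0 1%:M.
have R0b : R0 *m b = R0.
  by rewrite /R0 /b /Tb mul_row_block !mul0mx !mulmx0 !add0r mulmx1.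
have R0c : R0 *m c = R0 by rewrite -{1}R0b -mulmxA bc mulmx1.
have R0K : (R0 <= Kc)%MS.
  by apply/sub_kermxP; rewrite mulmxBr R0c mulmx1 subrr.
have R0Z : R0 *m Z2 = R0.
  by rewrite /R0 /Z2 mul_row_block !mul0mx !mulmx0 !addr0 add0r mulmx1.
have h1 : (\rank R0 <= \rank (Kc *m Z2))%N.
  by apply: mxrankS; rewrite -{1}R0Z; apply: submxMr.
apply: leq_trans h1.
have : R0 *m col_mx 0 1%:M = 1%:M :> 'M[F]_n.
  by rewrite mul_row_col mulmx0 add0r mulmx1.
move=> h; have := mxrankM_maxl R0 (col_mx 0 1%:M : 'M[F]_(n + n, n)).
by rewrite h mxrank1.
Qed.

End Lower.

End MLin3.
Import MLin3.

Module MAna.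

Section UF.
Variable U : ultrafilter.

Lemma uf_ext (A B : nat -> Prop) : (forall k, A k <-> B k) -> uf_mem U A -> uf_mem U B.
Proof. move=> h; apply: uf_upward => k /h //. Qed.

Lemma uf_not_and (A : nat -> Prop) : uf_mem U A -> uf_mem U (fun k => ~ A k) -> False.
Proof.
move=> h1 h2; apply: (@uf_proper U).
apply: uf_upward (uf_inter h1 h2) => k [] //.
Qed.

Lemma uf_cofinite : nonprincipal U -> forall N, uf_mem U (fun k => (N <= k)%nat).
Proof.
move=> np; elim=> [|N IH].
  by apply: uf_upward (@uf_full U).
have h : uf_mem U (fun k => ~ (k = N)).
  by case: (@uf_ultra U (fun k => k = N)) => // /np.
apply: uf_upward (uf_inter IH h) => k [h1 h2].
rewrite ltn_neqAle h1 andbT; apply/eqP => e; apply: h2; by rewrite e.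
Qed.

Local Open Scope R_scope.

Lemma ulim_exists (x : nat -> R) : (forall k, 0 <= x k <= 1) ->
  exists L, is_ulim U x L /\
    (forall c, uf_mem U (fun k => c <= x k) -> c <= L).
Proof.
move=> hx.
pose E := fun y => uf_mem U (fun k => y <= x k).
have hb : bound E.
  exists 1 => y hy; apply: Rnot_lt_le => hlt.
  apply: (@uf_proper U); apply: uf_upward hy => k hk.
  move: (hx k) => [_ ?]; lra.
have he : exists y, E y.
  exists 0; apply: uf_upward (@uf_full U) => k _; by case: (hx k).
have [L [hub hlub]] := completeness E hb he.
exists L; split; last by move=> c hc; apply: hub.
move=> eps heps.
have h1 : uf_mem U (fun k => x k < L + eps / 2).
  case: (@uf_ultra U (fun k => x k < L + eps / 2)) => // h.
  have : E (L + eps / 2).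
    by apply: uf_upward h => k hk; apply: Rnot_lt_le.
  move/hub; lra.
have [y [hy hyL]] : exists y, E y /\ L - eps / 2 < y.
  apply: NNPP => hn.
  have : L <= L - eps / 2.
    apply: hlub => y hy; apply: Rnot_lt_le => hlt; apply: hn; by exists y.
  lra.
apply: uf_upward (uf_inter h1 hy) => k [hk1 hk2].
apply: Rabs_def1; lra.
Qed.

Lemma not_ulim0 (x : nat -> R) : (forall k, 0 <= x k) -> ~ is_ulim U x 0 ->
  exists eps, 0 < eps /\ uf_mem U (fun k => eps <= x k).
Proof.
move=> hx hn; apply: NNPP => hne; apply: hn => eps heps.
case: (@uf_ultra U (fun k => Rabs (x k - 0) < eps)) => // h.
exfalso; apply: hne; exists eps; split => //.
apply: uf_upward h => k hk; apply: Rnot_lt_le => hlt; apply: hk.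
rewrite Rminus_0_r Rabs_right; [lra | by apply: Rle_ge].
Qed.

Lemma ulim_le0 (x y : nat -> R) : (forall k, 0 <= x k) ->
  uf_mem U (fun k => x k <= y k) -> is_ulim U y 0 -> is_ulim U x 0.
Proof.
move=> hx hxy hy eps heps.
apply: uf_upward (uf_inter hxy (hy eps heps)) => k [h1 h2].
move: h2; rewrite !Rminus_0_r => h2.
have h3 := Rle_abs (y k); have hx0 := hx k.
rewrite Rabs_right; [lra | by apply: Rle_ge].
Qed.

End UF.

End MAna.
Import MAna.

Module MRho.

Notation "a '-m' b" := (@GRing.add _ a (@GRing.opp _ b)) (at level 50, left associativity).
Notation "a '*M' b" := (mulmx a b) (at level 40, left associativity).
Notation "'I'" := (scalar_mx (GRing.one _)).

Local Open Scope R_scope.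

Lemma Rdiv_0r x : Rdiv x (INR 0) = 0.
Proof. by rewrite /Rdiv /= Rinv_0 Rmult_0_r. Qed.

Lemma rho_ge0 n (a : 'M[C]_n) : 0 <= rho a.
Proof.
rewrite /rho; case: n a => [|n] a; first by rewrite Rdiv_0r; lra.
apply: Rmult_le_pos; first exact: pos_INR.
apply: Rlt_le; apply: Rinv_0_lt_compat; apply: lt_0_INR; lia.
Qed.

Lemma rho_mono n (a b : 'M[C]_n) : (\rank a <= \rank b)%N -> rho a <= rho b.
Proof.
move=> h; rewrite /rho; case: n a b h => [|n] a b h; first by rewrite !Rdiv_0r; lra.
apply: Rmult_le_compat_r.
  apply: Rlt_le; apply: Rinv_0_lt_compat; apply: lt_0_INR; lia.
apply: le_INR; exact/leP.
Qed.

Lemma rho_le1 n (a : 'M[C]_n) : rho a <= 1.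
Proof.
rewrite /rho; case: n a => [|n] a; first by rewrite Rdiv_0r; lra.
have hn : 0 < INR n.+1 by apply: lt_0_INR; lia.
have := rank_leq_row a => /leP /le_INR h.
apply: (Rmult_le_reg_r (INR n.+1)) => //.
rewrite /Rdiv Rmult_assoc Rinv_l; lra.
Qed.

Lemma rho_add n (a b : 'M[C]_n) : rho (a + b)%R <= rho a + rho b.
Proof.
rewrite /rho; case: n a b => [|n] a b; first by rewrite !Rdiv_0r; lra.
rewrite /Rdiv -Rmult_plus_distr_r -plus_INR.
apply: Rmult_le_compat_r.
  apply: Rlt_le; apply: Rinv_0_lt_compat; apply: lt_0_INR; lia.
apply: le_INR; apply/leP; exact: mxrank_add.
Qed.

Lemma rho_tri n (a b c : 'M[C]_n) : rho (a -m c) <= rho (a -m b) + rho (b -m c).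
Proof.
have -> : a -m c = ((a -m b) + (b -m c))%R by rewrite addrA subrK.
exact: rho_add.
Qed.

Lemma rho_sym n (a b : 'M[C]_n) : rho (a -m b) = rho (b -m a).
Proof. by rewrite /rho -opprB mxrank_opp. Qed.

Lemma rho_Tm_upper n (a b : 'M[C]_n) :
  rho (Tm a -m Tm b) <= 3 / 2 * rho (a -m b).
Proof.
rewrite /rho; case: n a b => [|n] a b; first by rewrite !Rdiv_0r; lra.
have h := Tm_upper a b.
set r := \rank (a -m b) in h *; set r' := \rank (Tm a -m Tm b) in h *.
have hr : (r' <= 3 * r * n.+1)%N by lia.
move/leP/le_INR: hr; rewrite !mult_INR => hr.
have hn : 0 < INR n.+1 by apply: lt_0_INR; lia.
have e : INR n.+1 * INR (n.+1 + n.+1) = 2 * INR n.+1 * INR n.+1.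
  rewrite plus_INR; ring.
rewrite e /Rdiv.
apply: (Rmult_le_reg_r (2 * INR n.+1 * INR n.+1)); first by nra.
rewrite Rmult_assoc Rinv_l; last by nra.
have -> : 3 / 2 * (INR r * / INR n.+1) * (2 * INR n.+1 * INR n.+1)
   = 3 * INR r * INR n.+1 by field; lra.
move: hr; simpl (INR 3); lra.
Qed.

Lemma rho_Tm_lower n (a : 'M[C]_n) : a \in unitmx ->
  Rmin (9 / 8 * rho (a -m I)) (1 / 4) <= rho (Tm a -m I).
Proof.
move=> ua; case: n a ua => [|n] a ua.
  rewrite /rho Rdiv_0r Rmult_0_r; have := rho_ge0 (Tm a -m I).
  rewrite /rho => h; apply: Rle_trans h; apply: Rmin_l.
have h1 := lower1 ua; have h2 := lower2 ua.
have hr := rank_leq_row (a -m I).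
rewrite /rho.
set r := \rank (a -m I) in h1 h2 hr *; set r' := \rank (Tm a -m I) in h1 h2 *.
have hn : 0 < INR n.+1 by apply: lt_0_INR; lia.
set N := n.+1 in h1 h2 hr hn *.
have e : INR (N * (N + N)) = 2 * INR N * INR N.
  rewrite mult_INR plus_INR; ring.
rewrite e.
have H1 : INR (N - r) * INR r + INR r * (2 * INR N - 2 * INR r) <= INR r'.
  have -> : 2 * INR N - 2 * INR r = INR (N + N - r - r).
    rewrite !minus_INR ?plus_INR; try lia; ring.
  rewrite -!mult_INR -plus_INR; apply: le_INR; exact/leP.
have H2 : INR (N - r) * INR r + INR r * INR N <= INR r'.
  rewrite -!mult_INR -plus_INR; apply: le_INR; exact/leP.
rewrite minus_INR in H1 H2; try lia.
move/leP/le_INR: hr => hr.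
have hr0 := pos_INR r.
set R := INR r in H1 H2 hr hr0 *; set R' := INR r' in H1 H2 *; set X := INR N in H1 H2 hr hn *.
set x := R / X.
have hx : R = x * X by rewrite /x; field; lra.
have hx0 : 0 <= x by apply: Rmult_le_pos => //; apply: Rlt_le; apply: Rinv_0_lt_compat.
have hx1 : x <= 1.
  apply: (Rmult_le_reg_r X) => //; lra.
rewrite hx in H1 H2.
have hd : 0 < 2 * X * X by nra.
have hy1 : x * (3 - 3 * x) / 2 <= R' / (2 * X * X).
  apply: (Rmult_le_reg_r (2 * X * X)) => //.
  have -> : R' / (2 * X * X) * (2 * X * X) = R' by field; lra.
  nra.
have hy2 : x * (2 - x) / 2 <= R' / (2 * X * X).
  apply: (Rmult_le_reg_r (2 * X * X)) => //.
  have -> : R' / (2 * X * X) * (2 * X * X) = R' by field; lra.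
  nra.
rewrite -/x.
case: (Rle_lt_dec x (1/4)) => hc.
  apply: Rle_trans (Rmin_l _ _) _; nra.
apply: Rle_trans (Rmin_r _ _) _.
case: (Rle_lt_dec x (1/2)) => hc2; nra.
Qed.

End MRho.
Import MRho.

Module MIter.

Fixpoint sz (t n : nat) : nat :=
  match t with 0 => n | t'.+1 => (sz t' n * (sz t' n + sz t' n))%N end.

Fixpoint Titer (n : nat) (a : 'M[C]_n) (t : nat) {struct t} : 'M[C]_(sz t n) :=
  match t as t0 return 'M[C]_(sz t0 n) with
  | 0 => a
  | t'.+1 => Tm (Titer a t')
  end.

Lemma Titer_mul n (a b : 'M[C]_n) t : Titer (a *M b) t = Titer a t *M Titer b t.
Proof. by elim: t => [|t IH] //=; rewrite IH TmM. Qed.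

Lemma Titer_unit n (a : 'M[C]_n) t : a \in unitmx -> Titer a t \in unitmx.
Proof. by move=> ua; elim: t => [|t IH] //=; apply: Tm_unit. Qed.

Lemma sz_ge n t : (1 <= n)%N -> (n <= sz t n)%N /\ (2 ^ t <= sz t n)%N.
Proof.
move=> hn; elim: t => [|t [IH1 IH2]] /=; first by split => //; rewrite expn0.
have h : (1 <= sz t n)%N by lia.
rewrite expnS; split; nia.
Qed.

Local Open Scope R_scope.

Lemma rho_Titer_upper n (a b : 'M[C]_n) t :
  rho (Titer a t -m Titer b t) <= (3 / 2) ^ t * rho (a -m b).
Proof.
elim: t => [|t IH] /=; first lra.
apply: Rle_trans (rho_Tm_upper _ _) _.
have h0 := rho_ge0 (Titer a t -m Titer b t).
nra.
Qed.

Lemma rho_Titer_lower n (a : 'M[C]_n) t : a \in unitmx ->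
  Rmin ((9 / 8) ^ t * rho (a -m I)) (1 / 4) <= rho (Titer a t -m I).
Proof.
move=> ua; elim: t => [|t IH] /=.
  rewrite Rmult_1_l; apply: Rmin_l.
apply: Rle_trans (rho_Tm_lower (Titer_unit t ua)).
have h0 := rho_ge0 (a -m I).
move: IH; set u := rho (Titer a t -m I); set v := (9 / 8) ^ t * rho (a -m I).
move=> IH.
have hv : 0 <= v by apply: Rmult_le_pos => //; apply: pow_le; lra.
have -> : 9 / 8 * (9 / 8) ^ t * rho (a -m I) = 9/8 * v by rewrite /v; ring.
unfold Rmin in *.
repeat destruct Rle_dec; lra.
Qed.

Lemma pow98 t : 1 + INR t / 8 <= (9 / 8) ^ t.
Proof.
elim: t => [|t IH]; first by rewrite /=; lra.
rewrite S_INR /=.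
have := pos_INR t; nra.
Qed.

Lemma eventually_big eps : 0 < eps -> exists t0, forall t, (t0 <= t)%N ->
  1 / 4 <= (9 / 8) ^ t * eps.
Proof.
move=> he; have [N hN] := INR_archimed (eps / 8) (1 / 4) ltac:(lra).
exists N => t ht.
have h1 := pow98 t.
have h2 : INR N <= INR t by apply: le_INR; apply/leP.
have h3 : 0 <= INR N := pos_INR N.
nra.
Qed.

End MIter.
Import MIter.

Module MMain.

Section Prod.
Variable U : ultrafilter.

Definition Vmem (B : nat -> nat -> Prop) :=
  uf_mem U (fun t => uf_mem U (fun k => B k t)).
Definition pmem (A : nat -> Prop) := Vmem (fun k t => A (to_nat (k, t))).

Lemma pmem_full : pmem (fun _ => True).
Proof. by apply: uf_upward (@uf_full U) => t _; apply: uf_upward (@uf_full U). Qed.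

Lemma pmem_proper : ~ pmem (fun _ => False).
Proof.
move=> h; apply: (@uf_proper U); apply: uf_upward h => t ht.
exact: (@uf_proper U) ht.
Qed.

Lemma pmem_inter A B : pmem A -> pmem B -> pmem (fun k => A k /\ B k).
Proof.
move=> hA hB; apply: uf_upward (uf_inter hA hB) => t [h1 h2].
exact: uf_inter h1 h2.
Qed.

Lemma pmem_upward (A B : nat -> Prop) : (forall k, A k -> B k) -> pmem A -> pmem B.
Proof.
move=> hAB hA; apply: uf_upward hA => t ht; apply: uf_upward ht => k; exact: hAB.
Qed.

Lemma pmem_ultra (A : nat -> Prop) : pmem A \/ pmem (fun k => ~ A k).
Proof.
case: (@uf_ultra U (fun t => uf_mem U (fun k => A (to_nat (k, t))))) => h; first by left.
right; apply: uf_upward h => t ht.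
by case: (@uf_ultra U (fun k => A (to_nat (k, t)))).
Qed.

Definition prodU : ultrafilter :=
  Ultrafilter pmem_full pmem_proper pmem_inter pmem_upward pmem_ultra.

Lemma prodU_np : nonprincipal U -> nonprincipal prodU.
Proof.
move=> np m h; have h' : Vmem (fun k t => to_nat (k, t) = m) := h.
apply: (@uf_proper U); apply: uf_upward h' => t ht.
apply: (np (of_nat m).1); apply: uf_upward ht => k hk.
by rewrite -hk cancel_of_to.
Qed.

Lemma prodU_intro (f : nat * nat -> Prop) (B : nat -> nat -> Prop) :
  (forall k t, B k t -> f (k, t)) -> Vmem B -> uf_mem prodU (fun j => f (of_nat j)).
Proof.
move=> hB hV; change (Vmem (fun k t => f (of_nat (to_nat (k, t))))).
apply: uf_upward hV => t ht; apply: uf_upward ht => k hk.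
by rewrite cancel_of_to; apply: hB.
Qed.

End Prod.

End MMain.
Import MMain.


Lemma rank_unitl n p (X : 'M[C]_n) (Y : 'M[C]_(n, p)) : X \in unitmx ->
  \rank (X *M Y) = \rank Y.
Proof.
move=> uX; apply/eqP; rewrite eqn_leq mxrankM_maxr /=.
have {1}-> : Y = invmx X *M (X *M Y) by rewrite mulmxA mulVmx // mul1mx.
exact: mxrankM_maxr.
Qed.

Local Open Scope R_scope.

Lemma rho_e n (X : 'M[C]_n) : X \in unitmx ->
  rho (X -m X *M X) = rho (X -m I).
Proof.
move=> uX; rewrite /rho.
have -> : X -m X *M X = X *M (I -m X) by rewrite mulmxBr mulmx1.
by rewrite rank_unitl // -opprB mxrank_opp.
Qed.

Lemma abs0_lt x e : 0 <= x -> Rabs (x - R0) < e -> x < e.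
Proof. move=> h; rewrite Rminus_0_r Rabs_right; [lra|lra]. Qed.

Lemma real3 a b c eps : eps <= a -> c < eps / 2 -> a <= b + c -> eps / 2 <= b.
Proof. lra. Qed.

Theorem mainTheorem7 (G : countable_group) :
  linear_sofic G ->
  exists (U' : ultrafilter) (m : nat -> nat) (Psi : G -> mxseq m),
    [/\ nonprincipal U', diverges m, ultraprod_morphism U' Psi
      & forall g : G, g <> gone G ->
          exists L : R, d_omega_is U' (Psi g) (mxseq_one m) L /\ 1 / 4 <= L].
Proof.
move=> [U [n [Phi [np dn [hGL hmor] hinj]]]].
have [K hK] := dn 1%N.
pose kk k := maxn k K.
have kkK k : (K <= k)%N -> kk k = k by move=> h; rewrite /kk; apply/maxn_idPl.
pose m j := sz (of_nat j).2 (n (kk (of_nat j).1)).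
pose Psi (g : G) : mxseq m := fun j => Titer (Phi g (kk (of_nat j).1)) (of_nat j).2.
exists (prodU U), m, Psi; split.
- exact: prodU_np.
- move=> N; have [K1 hK1] := dn N.
  pose M := maxn K1 N.
  exists (M + 2 * M * M + 1)%N => j hj.
  rewrite /m.
  case e : (of_nat j) => [k t] /=.
  have hs := to_nat_spec k t.
  rewrite -e cancel_to_of in hs.
  have h1 : (1 <= n (kk k))%N by apply: hK; rewrite /kk leq_maxr.
  have [s1 s2] := sz_ge t h1.
  have hKM : (K1 <= M)%N by rewrite leq_maxl.
  have hNM : (N <= M)%N by rewrite leq_maxr.
  have [hk|ht] : (M <= k)%N \/ (M <= t)%N.
    case: (leqP M k) => hk; first by left.
    case: (leqP M t) => ht; first by right.
    exfalso; nia.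
  + apply: leq_trans s1; apply: hK1; apply: leq_trans (leq_maxl k K).
    exact: leq_trans hKM hk.
  + apply: leq_trans s2; apply: leq_trans (ltnW (ltn_expl t (isT : (1 < 2)%N))).
    exact: leq_trans hNM ht.
- split.
  + move=> g j; apply: Titer_unit; exact: hGL.
  + move=> g h eps heps.
    refine (prodU_intro
      (f := fun p => Rabs (rho (Titer (Phi (gmul g h) (kk p.1)) p.2 -m
               Titer (Phi g (kk p.1)) p.2 *M Titer (Phi h (kk p.1)) p.2) - R0) < eps)
      (B := fun k t => (K <= k)%N /\
              rho (Phi (gmul g h) k -m Phi g k *M Phi h k) < eps / (3 / 2) ^ t) _ _).
      move=> k t [hk hlt].
      cbn [fst snd].
      rewrite (kkK k hk).
      rewrite -Titer_mul.
      have hp : 0 < (3 / 2) ^ t by apply: pow_lt; lra.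
      have h0 := rho_ge0 (Titer (Phi (gmul g h) k) t -m Titer (Phi g k *M Phi h k) t).
      have hu := rho_Titer_upper (Phi (gmul g h) k) (Phi g k *M Phi h k) t.
      rewrite Rminus_0_r Rabs_right; last by apply: Rle_ge; exact: rho_ge0.
      apply: Rle_lt_trans hu _.
      have -> : eps = (3 / 2) ^ t * (eps / (3 / 2) ^ t) by field; lra.
      by apply: Rmult_lt_compat_l.
    apply: uf_upward (@uf_full U) => t _.
    apply: uf_inter; first exact: uf_cofinite.
    have hp : 0 < (3 / 2) ^ t by apply: pow_lt; lra.
    have := hmor g h (eps / (3 / 2) ^ t) ltac:(apply: Rdiv_lt_0_compat; lra).
    apply: uf_upward => k; apply: abs0_lt; exact: rho_ge0.
- move=> g hg.
  have hn1 : ~ is_ulim U (fun k => rho (Phi g k -m Phi (gone G) k)) 0.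
    by move=> h; apply: hg; apply: hinj.
  have [eps [heps hG1]] := not_ulim0 (fun k => rho_ge0 _) hn1.
  have he : is_ulim U (fun k => rho (Phi (gone G) k -m I)) 0.
    move=> e he.
    have := hmor (gone G) (gone G) e he; rewrite gmul1.
    apply: uf_upward => k.
    by rewrite /mxseq_mul rho_e; last exact: hGL.
  have hG2 : uf_mem U (fun k => eps / 2 <= rho (Phi g k -m I)).
    have := he (eps / 2) ltac:(lra).
    move=> h2; apply: uf_upward (uf_inter hG1 h2) => k [k1 k2].
    have k3 := abs0_lt (rho_ge0 _) k2.
    have := rho_tri (Phi g k) I (Phi (gone G) k).
    rewrite (rho_sym I) => hh.
    apply: (real3 k1 k3); exact: hh.
  have [t0 ht0] := eventually_big (eps := eps / 2) ltac:(lra).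
  have hbig : uf_mem (prodU U) (fun j => 1 / 4 <= rho (Psi g j -m mxseq_one m j)).
    refine (prodU_intro
      (f := fun p => 1 / 4 <= rho (Titer (Phi g (kk p.1)) p.2 -m I))
      (B := fun k t => (t0 <= t)%N /\ (K <= k)%N /\ eps / 2 <= rho (Phi g k -m I)) _ _).
      move=> k t [ht [hk hr]]; cbn [fst snd]; rewrite (kkK k hk).
      apply: Rle_trans (rho_Titer_lower t (hGL g k)).
      have h4 := ht0 t ht.
      have hp : 0 < (9 / 8) ^ t by apply: pow_lt; lra.
      have h5 : (9 / 8) ^ t * (eps / 2) <= (9 / 8) ^ t * rho (Phi g k -m I).
        by apply: Rmult_le_compat_l; lra.
      unfold Rmin; destruct Rle_dec; lra.
    apply: uf_upward (uf_cofinite np t0) => t ht.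
    apply: uf_upward (uf_inter (uf_cofinite np K) hG2) => k [hk hr].
    by split; [|split].
  have [L [hL hLge]] := ulim_exists (prodU U)
     (x := fun j => rho (Psi g j -m mxseq_one m j)) (fun j => conj (rho_ge0 _) (rho_le1 _)).
  exists L; split; first exact: hL.
  exact: hLge.
Qed.
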